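(* Let $\mathcal{C}$ be an $\mathbb{F}_q\mathcal{R}$-skew cyclic code of length $(\alpha,\beta)$, viewed inside $R_{\alpha,\beta}$, and let $M=\{t(x)\in\mathcal{R}[x;\theta]/\langle x^\beta-1\rangle : (m(x),t(x))\in\mathcal{C}\text{ for some } m(x)\in\mathbb{F}_q[x;\Theta]/\langle x^\alpha-1\rangle\}$. Then $M$ is a left $\mathcal{R}[x;\theta]$-submodule of $\mathcal{R}[x;\theta]/\langle x^\beta-1\rangle$ which is generated by a single element.
   Context: Let $p$ be a prime, $q=p^m$, $\mathcal{R}=\mathbb{F}_q[u]/\langle u^2-u\rangle$. Fix $i$; $\Theta(a)=a^{p^i}$ on $\mathbb{F}_q$ and $\theta(a+ub)=a^{p^i}+ub^{p^i}$ on $\mathcal{R}$; $\eta(a+ub)=a$. $\mathbb{F}_q[x;\Theta]$, $\mathcal{R}[x;\theta]$ are skew polynomial rings with multiplication determined by $(ax^i)(bx^j)=a\Theta^i(b)x^{i+j}$ (resp. with $\theta$). $R_{\alpha,\beta}=\mathbb{F}_q[x;\Theta]/\langle x^\alpha-1\rangle\times\mathcal{R}[x;\theta]/\langle x^\beta-1\rangle$, identified with $\mathbb{F}_q^\alpha\times\mathcal{R}^\beta$ via coefficient vectors, is a left $\mathcal{R}[x;\theta]$-module via $r(x)*(k(x),t(x))=(\eta(r(x))k(x),r(x)t(x))$ ($\eta$ coefficientwise, reduction modulo $x^\alpha-1$, $x^\beta-1$). An $\mathbb{F}_q\mathcal{R}$-skew cyclic code of length $(\alpha,\beta)$ is an $\mathcal{R}$-submodule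 $\mathcal{C}$ of $\mathbb{F}_q^\alpha\times\mathcal{R}^\beta$ (with $s*(x,y)=(\eta(s)x,sy)$ componentwise) closed under $\sigma(x_0,\dots,x_{\alpha-1},y_0,\dots,y_{\beta-1})=(\Theta(x_{\alpha-1}),\Theta(x_0),\dots,\Theta(x_{\alpha-2}),\theta(y_{\beta-1}),\theta(y_0),\dots,\theta(y_{\beta-2}))$; equivalently a left $\mathcal{R}[x;\theta]$-submodule of $R_{\alpha,\beta}$. *)

(* Defs.v *)
From HB Require Import structures.
From mathcomp Require Import all_boot all_order all_algebra.
From mathcomp Require Import ring.
Set Implicit Arguments. Unset Strict Implicit. Unset Printing Implicit Defensive.
Import GRing.Theory.
Local Open Scope ring_scope.

(* ---------- The ring  R = F[u]/<u^2 - u>,  element a + u b  stored as (a, b) ---- *)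
Record Ru (F : Type) := mkRu { ra : F; rb : F }.
Arguments mkRu {F}.

Section RuRing.
Variable F : fieldType.

Definition ru2p (x : Ru F) : F * F := (ra x, rb x).
Definition p2ru (y : F * F) : Ru F := mkRu y.1 y.2.
Lemma ru2pK : cancel ru2p p2ru. Proof. by case. Qed.

HB.instance Definition _ := Equality.copy (Ru F) (can_type ru2pK).
HB.instance Definition _ := Choice.copy (Ru F) (can_type ru2pK).

Definition ru_zero : Ru F := mkRu 0 0.
Definition ru_add (x y : Ru F) := mkRu (ra x + ra y) (rb x + rb y).
Definition ru_opp (x : Ru F) := mkRu (- ra x) (- rb x).

Lemma ru_addA : associative ru_add.
Proof. by case=> ? ?; case=> ? ?; case=> ? ?; rewrite /ru_add /=; congr mkRu; ring. Qed.
Lemma ru_addC : commutative ru_add.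
Proof. by case=> ? ?; case=> ? ?; rewrite /ru_add /=; congr mkRu; ring. Qed.
Lemma ru_add0 : left_id ru_zero ru_add.
Proof. by case=> ? ?; rewrite /ru_add /=; congr mkRu; ring. Qed.
Lemma ru_addN : left_inverse ru_zero ru_opp ru_add.
Proof. by case=> ? ?; rewrite /ru_add /=; congr mkRu; ring. Qed.

HB.instance Definition _ := GRing.isZmodule.Build (Ru F) ru_addA ru_addC ru_add0 ru_addN.

(* (a + u b)(c + u d) = ac + u (ad + bc + bd), using u^2 = u *)
Definition ru_one : Ru F := mkRu 1 0.
Definition ru_mul (x y : Ru F) :=
  mkRu (ra x * ra y) (ra x * rb y + rb x * ra y + rb x * rb y).

Lemma ru_mulA : associative ru_mul.
Proof. by case=> ? ?; case=> ? ?; case=> ? ?; rewrite /ru_mul /=; congr mkRu; ring. Qed.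
Lemma ru_mulC : commutative ru_mul.
Proof. by case=> ? ?; case=> ? ?; rewrite /ru_mul /=; congr mkRu; ring. Qed.
Lemma ru_mul1 : left_id ru_one ru_mul.
Proof. by case=> ? ?; rewrite /ru_mul /=; congr mkRu; ring. Qed.
Lemma ru_mulDl : left_distributive ru_mul ru_add.
Proof. by case=> ? ?; case=> ? ?; case=> ? ?; rewrite /ru_mul /ru_add /=; congr mkRu; ring. Qed.
Lemma ru_one_neq0 : ru_one != ru_zero.
Proof. by apply/eqP => -[] /eqP; rewrite oner_eq0. Qed.

HB.instance Definition _ := GRing.Zmodule_isComNzRing.Build (Ru F)
  ru_mulA ru_mulC ru_mul1 ru_mulDl ru_one_neq0.

Definition ru_u : Ru F := mkRu 0 1.
Definition ru_lift (f : F -> F) (x : Ru F) : Ru F := mkRu (f (ra x)) (f (rb x)).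
Definition eta (x : Ru F) : F := ra x.
End RuRing.

Definition Theta (F : fieldType) (p i : nat) (a : F) : F := a ^+ (p ^ i).
Definition theta (F : fieldType) (p i : nat) (x : Ru F) : Ru F :=
  ru_lift (Theta p i) x.

(* sigma_f (v_0,...,v_{n-1}) = (f v_{n-1}, f v_0, ..., f v_{n-2}) *)
Definition twshift (T : Type) (n : nat) (f : T -> T) (v : 'rV[T]_n) : 'rV[T]_n :=
  \row_(j < n) f (v 0 (ord_pred j)).

Definition sigmaFR (F : fieldType) (p i a b : nat)
    (c : 'rV[F]_a * 'rV[Ru F]_b) : 'rV[F]_a * 'rV[Ru F]_b :=
  (twshift (Theta p i) c.1, twshift (theta p i) c.2).

Definition scaleFR (F : fieldType) (a b : nat) (s : Ru F)
    (c : 'rV[F]_a * 'rV[Ru F]_b) : 'rV[F]_a * 'rV[Ru F]_b :=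
  (map_mx (fun z => eta s * z) c.1, map_mx (fun z => s * z) c.2).

Definition skew_cyclic_code (F : fieldType) (p i a b : nat)
    (C : 'rV[F]_a * 'rV[Ru F]_b -> Prop) : Prop :=
  [/\ C (0, 0),
      (forall c d, C c -> C d -> C (c.1 + d.1, c.2 + d.2)),
      (forall s c, C c -> C (scaleFR s c)) &
      (forall c, C c -> C (sigmaFR p i c))].

(* Elements of R[x;theta] are stored by their coefficient sequence in {poly R};
   the multiplication is the skew one: (a x^i)(b x^j) = a theta^i(b) x^(i+j). *)
Definition skmul (R : nzRingType) (th : R -> R) (f g : {poly R}) : {poly R} :=
  \poly_(k < (size f + size g).-1)
    \sum_(i < k.+1) f`_i * iter i th (g`_(k - i)).

(* Reduction modulo x^n - 1 (left ideal generated by x^n - 1) to the coefficient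
   vector in R^n:  x^k == x^(k mod n). *)
Definition redmod (R : nzRingType) (n : nat) (h : {poly R}) : 'rV[R]_n :=
  \row_(k < n) \sum_(0 <= j < size h | (j %% n)%N == k :> nat) h`_j.

Definition rep (R : nzRingType) (n : nat) (t : 'rV[R]_n) : {poly R} :=
  Poly [seq t 0 k | k <- enum 'I_n].

Definition skact (R : nzRingType) (th : R -> R) (n : nat)
    (r : {poly R}) (t : 'rV[R]_n) : 'rV[R]_n :=
  redmod n (skmul th r (rep t)).

Definition left_submodule (R : nzRingType) (th : R -> R) (n : nat)
    (M : 'rV[R]_n -> Prop) : Prop :=
  [/\ M 0,
      (forall t1 t2, M t1 -> M t2 -> M (t1 + t2)) &
      (forall r t, M t -> M (skact th r t))].

Definition singly_generated (R : nzRingType) (th : R -> R) (n : nat)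
    (M : 'rV[R]_n -> Prop) : Prop :=
  exists g : 'rV[R]_n, forall t, M t <-> exists r : {poly R}, t = skact th r g.

(* Main.v *)
Require Import Defs.
From HB Require Import structures.
From mathcomp Require Import all_boot all_order all_algebra all_field.
From mathcomp Require Import zify ring.
From Stdlib Require Import Classical.
Set Implicit Arguments. Unset Strict Implicit. Unset Printing Implicit Defensive.
Import GRing.Theory.
Local Open Scope ring_scope.


Section Fidx.
Local Open Scope nat_scope.
Variables (n : nat) (npos : (0 < n)%N).
Definition fidx (a : nat) (k : 'I_n) : 'I_n :=
  Ordinal (ltn_pmod (k + (n - a %% n)) npos).

Lemma fidxP a (k : 'I_n) : ((fidx a k + a) %% n = k)%N.
Proof.
rewrite /= modnDml.
have -> : (k + (n - a %% n) + a = k + (a %/ n).+1 * n)%N.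
  move: (ltn_pmod a npos); rewrite {3}(div.divn_eq a n).
  move: (a %/ n) (a %% n) => q r hr; nia.
by rewrite addnC modnMDl modn_small.
Qed.

Lemma fidx_uniq a (k x : 'I_n) : ((x + a) %% n = k)%N -> x = fidx a k.
Proof.
move=> h; apply: val_inj => /=.
rewrite -(modn_small (ltn_ord x)) -[X in _ = X](modn_small (ltn_ord (fidx a k))).
by apply/eqP; rewrite -(eqn_modDr a) h fidxP.
Qed.

Lemma fidx_sub a (k : 'I_n) : (a <= k)%N -> val (fidx a k) = (k - a)%N.
Proof.
move=> h.
have hx : (k - a < n)%N by apply: leq_ltn_trans (leq_subr _ _) (ltn_ord k).
by rewrite -(fidx_uniq (x := Ordinal hx)) //= subnK // modn_small.
Qed.

Lemma iter_twshift (T : Type) (f : T -> T) j (v : 'rV[T]_n) k :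
  (iter j (twshift f) v) ord0 k = iter j f (v ord0 (fidx j k)).
Proof.
elim: j k => [|j IH] k /=.
  by rewrite -(fidx_uniq (x := k)) // addn0 modn_small.
rewrite /twshift mxE IH; congr (f (iter j f (v ord0 _))).
apply: fidx_uniq; rewrite addnS -addn1 -modnDml fidxP /= modnDml.
by rewrite addn1 prednK ?addn_gt0 ?npos ?orbT // modnDr modn_small.
Qed.
End Fidx.
Arguments fidx : simpl never.

Section Skact.
Variables (R : nzRingType) (th : R -> R) (n : nat).
Hypotheses (npos : (0 < n)%N) (th0 : th 0 = 0).

Lemma iter_th0 j : iter j th 0 = 0.
Proof. by elim: j => //= j ->. Qed.

Lemma coef_skmul f g k :
  (skmul th f g)`_k = \sum_(i < k.+1) f`_i * iter i th g`_(k - i).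
Proof.
rewrite /skmul coef_poly; case: ifP => // hk; symmetry; apply: big1 => i _.
case: (ltnP i (size f)) => hi.
  rewrite [g`_ _]nth_default ?iter_th0 ?mulr0 //.
  move: hk (ltn_ord i) hi => /negbT; rewrite -leqNgt. move: (size f) (size g) (nat_of_ord i) => a b c. lia.
by rewrite nth_default // mul0r.
Qed.

Lemma rep_coef (t : 'rV[R]_n) (l : 'I_n) : (rep t)`_l = t ord0 l.
Proof.
rewrite /rep coef_Poly (nth_map l) ?size_enum_ord //.
by rewrite nth_ord_enum.
Qed.

Lemma rep_coef_out (t : 'rV[R]_n) l : (n <= l)%N -> (rep t)`_l = 0.
Proof.
by move=> h; rewrite /rep coef_Poly nth_default // size_map size_enum_ord.
Qed.

Lemma skact_sum (r : {poly R}) (t : 'rV[R]_n) K : (size r <= K)%N ->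
  skact th r t = \sum_(i < K) r`_i *: iter i (twshift th) t.
Proof.
move=> hK; apply/matrixP => z k; rewrite ord1 {z}.
rewrite summxE /skact /redmod mxE.
under [RHS]eq_bigr => i _ do rewrite mxE iter_twshift //.
set h := skmul th r (rep t).
set B := (size h + K + n)%N.
have -> : \sum_(0 <= j < size h | (j %% n)%N == k) h`_j =
          \sum_(0 <= j < B | (j %% n)%N == k) h`_j.
  rewrite [RHS](@big_cat_nat _ _ _ (size h)) //; last first.
    by rewrite /B -addnA leq_addr.
  rewrite [X in _ = _ + X]big1_seq ?addr0 // => j /andP [_].
  by rewrite mem_index_iota => /andP[hj _]; exact: nth_default.
rewrite big_mkord.
rewrite /h.
apply: etrans. apply: eq_bigr => j _. set X := (X in X = _). unfold X. rewrite coef_skmul.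
  rewrite (big_ord_widen B (fun i => r`_i * iter i th (rep t)`_(j - i))) //.
rewrite (exchange_big_dep xpredT) //=.
rewrite [RHS](big_ord_widen B (fun i => r`_i * iter i th (t ord0 (fidx npos i k)))); last first.
  by rewrite /B addnAC leq_addl.
rewrite [RHS]big_mkcond /=; apply: eq_bigr => i _.
case: ifP => hiK; last first.
  apply: big1 => j _; rewrite nth_default ?mul0r //.
  by apply: leq_trans hK _; rewrite leqNgt hiK.
have hj0 : (i + fidx npos i k < B)%N.
  move: (ltn_ord (fidx npos i k)) hiK.
  move: (nat_of_ord (fidx npos i k)) (nat_of_ord i) => a b; rewrite /B; lia.
rewrite (bigD1 (Ordinal hj0)); last first.
  by rewrite /= addnC (fidxP npos) eqxx ltnS leq_addl.
rewrite addKn rep_coef big1 /= ?addr0 // => j /andP[/andP[/eqP hjk hij] hne].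
case: (ltnP (j - i) n) => hjn.
  have hf : (j - i)%N = fidx npos i k.
    by rewrite -(fidx_uniq npos (x := Ordinal hjn)) //= subnK // -ltnS.
  exfalso; move/negP: hne; apply; apply/eqP/val_inj.
  change (nat_of_ord j = i + fidx npos i k)%N.
  by rewrite -hf subnKC // -ltnS.
by rewrite rep_coef_out // iter_th0 mulr0.
Qed.
End Skact.

Lemma min_ex (P : nat -> Prop) N : P N -> exists d, P d /\ forall d', (d' < d)%N -> ~ P d'.
Proof.
elim/ltn_ind: N => N IH hN.
case: (classic (exists d', (d' < N)%N /\ P d')) => [[d' [h1 h2]]|hno].
  exact: IH h1 h2.
by exists N; split => // d' h1 h2; apply: hno; exists d'.
Qed.

Section Cyc.
Variables (K : fieldType) (Th : K -> K) (n : nat).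
Hypotheses (npos : (0 < n)%N) (Th0 : Th 0 = 0) (ThN0 : forall x, x != 0 -> Th x != 0).
Variable V : 'rV[K]_n -> Prop.
Hypotheses (V0 : V 0) (VD : forall a b, V a -> V b -> V (a + b))
  (VZ : forall c a, V a -> V (c *: a)) (VS : forall a, V a -> V (twshift Th a)).

Definition Zfrom (v : 'rV[K]_n) (e : nat) := forall k : 'I_n, (e <= k)%N -> v ord0 k = 0.

Lemma iterTh0 j : iter j Th 0 = 0.
Proof. by elim: j => //= j ->. Qed.

Lemma iterThN0 j x : x != 0 -> iter j Th x != 0.
Proof. by move=> hx; elim: j => //= j; apply: ThN0. Qed.

Lemma VSi j a : V a -> V (iter j (twshift Th) a).
Proof. by move=> ha; elim: j => //= j; apply: VS. Qed.

Lemma row0P (v : 'rV[K]_n) : Zfrom v 0 -> v = 0.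
Proof. by move=> h; apply/matrixP => z k; rewrite ord1 mxE h. Qed.

Lemma cyclic_gen : exists g, V g /\ forall w, V w ->
  exists c : nat -> K, w = \sum_(i < n) c i *: iter i (twshift Th) g.
Proof.
case: (classic (exists v, V v /\ v != 0)) => [[v0 [Vv0 v0n]] | Hno]; last first.
  exists 0; split => // w Vw; exists (fun _ => 0).
  rewrite big1 => [|i _]; last by rewrite scale0r.
  by case: (eqVneq w 0) => // hw; exfalso; apply: Hno; exists w.
have P0 : exists v, [/\ V v, v != 0 & Zfrom v n].
  by exists v0; split => // k hk; move: (ltn_ord k); rewrite ltnNge hk.
have [d [[g [Vg gn Zg]] dmin]] := @min_ex (fun e => exists v, [/\ V v, v != 0 & Zfrom v e]) n P0.
exists g; split => //.
case: d Zg dmin => [|d1] Zg dmin; first by rewrite (row0P Zg) eqxx in gn.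
have hd1 : (d1 < n)%N.
  rewrite ltnNge; apply/negP => hle; apply: (dmin n) => //.
have gd1 : g ord0 (Ordinal hd1) != 0.
  apply/negP => /eqP h0; apply: (dmin d1) => //; exists g; split => // k.
  rewrite leq_eqVlt => /orP[/eqP hk|hk]; last by apply: Zg.
  by have -> : k = Ordinal hd1 by apply: val_inj.
suff main : forall e w, V w -> Zfrom w e ->
    exists c : nat -> K, w = \sum_(i < n) c i *: iter i (twshift Th) g.
  move=> w Vw; apply: (main n) => // k hk.
  by move: (ltn_ord k); rewrite ltnNge hk.
elim/ltn_ind => e IH w Vw Zw.
case: (eqVneq w 0) => [->|wn].
  by exists (fun _ => 0); rewrite big1 // => i _; rewrite scale0r.
case: (ltnP n e) => hne.
  apply: (IH n hne) => // k hk; by move: (ltn_ord k); rewrite ltnNge hk.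
case: e IH Zw hne => [|e1] IH Zw hne; first by rewrite (row0P Zw) eqxx in wn.
have hde : (d1 <= e1)%N.
  rewrite leqNgt; apply/negP => hlt; apply: (dmin e1.+1) => //.
  by exists w.
set j := (e1 - d1)%N.
have hj : (j < n)%N by rewrite /j; lia.
have he1 : (e1 < n)%N by [].
set lc := iter j Th (g ord0 (Ordinal hd1)).
have lcn : lc != 0 by apply: iterThN0.
set c0 := w ord0 (Ordinal he1) / lc.
set w' := w + (- c0) *: iter j (twshift Th) g.
have Vw' : V w' by apply: VD => //; apply: VZ; apply: VSi.
have Zw' : Zfrom w' e1.
  move=> k hk; rewrite /w' !mxE iter_twshift.
  have hjk : (j <= k)%N by apply: leq_trans (leq_subr _ _) hk.
  have fk : val (fidx npos j k) = (k - j)%N by apply: fidx_sub.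
  rewrite leq_eqVlt in hk; case/orP: hk => [/eqP hk|hk].
    have -> : fidx npos j k = Ordinal hd1.
      by apply: val_inj; rewrite fk /= -hk /j subKn.
    have -> : k = Ordinal he1 by apply: val_inj.
    by rewrite -/lc /c0 mulNr divfK // subrr.
  rewrite Zw // Zg ?iterTh0 ?mulr0 ?addr0 // fk.
  rewrite /j; move: hk hde; lia.
have [c' hc'] := IH e1 (ltnSn _) w' Vw' Zw'.
exists (fun i => c' i + (if i == j then c0 else 0)).
under eq_bigr => i _ do rewrite scalerDl.
rewrite big_split /= -hc' (bigD1 (Ordinal hj)) //= eqxx big1 ?addr0.
  by rewrite /w' addrAC scaleNr addrK.
by move=> i /negbTE hi; rewrite -val_eqE /= in hi; rewrite hi scale0r.
Qed.
End Cyc.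

Section RuFacts.
Variable F : fieldType.
Implicit Types x y : Ru F.
Lemma ra0 : ra (0 : Ru F) = 0. Proof. by []. Qed.
Lemma rb0 : rb (0 : Ru F) = 0. Proof. by []. Qed.
Lemma raD x y : ra (x + y) = ra x + ra y. Proof. by []. Qed.
Lemma rbD x y : rb (x + y) = rb x + rb y. Proof. by []. Qed.
Lemma raM x y : ra (x * y) = ra x * ra y. Proof. by []. Qed.
Lemma rbM x y : rb (x * y) = ra x * rb y + rb x * ra y + rb x * rb y. Proof. by []. Qed.
Lemma ruE x y : ra x = ra y -> ra x + rb x = ra y + rb y -> x = y.
Proof.
case: x => a b; case: y => c d /= -> h; congr mkRu.
by apply: (addrI c).
Qed.
Definition phi2 x := ra x + rb x.
Lemma phi2D x y : phi2 (x + y) = phi2 x + phi2 y.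
Proof. rewrite /phi2 raD rbD; ring. Qed.
Lemma phi20 : phi2 0 = 0.
Proof. by rewrite /phi2 ra0 rb0 addr0. Qed.
Lemma phi2M x y : phi2 (x * y) = phi2 x * phi2 y.
Proof. rewrite /phi2 raM rbM; ring. Qed.
End RuFacts.

Theorem lemma2 (F : finFieldType) (p m i : nat) (hp : prime p)
    (hq : #|F| = (p ^ m)%N) (alpha beta : nat)
    (ha : (0 < alpha)%N) (hb : (0 < beta)%N)
    (C : 'rV[F]_alpha * 'rV[Ru F]_beta -> Prop)
    (hC : skew_cyclic_code p i C) :
  let M : 'rV[Ru F]_beta -> Prop :=
    fun t => exists m0 : 'rV[F]_alpha, C (m0, t) in
  left_submodule (theta p i) M /\ singly_generated (theta p i) M.
Proof.
move=> M.
have [C0 CD CZ CS] := hC.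
pose Th : F -> F := Theta p i.
set th := theta p i.
have pchar : p \in [pchar F] := card_finPcharP hq hp.
have pi0 : (p ^ i != 0)%N by rewrite expn_eq0 negb_and; case: (ltngtP 0 p) => // hp0; rewrite -hp0 in hp.
have Th0 : Th 0 = 0 by rewrite /Th /Theta expr0n (negbTE pi0).
have ThN0 : forall x, x != 0 -> Th x != 0 by move=> x hx; rewrite /Th /Theta expf_neq0.
have ThD : forall x y, Th (x + y) = Th x + Th y.
  move=> x y; rewrite /Th /Theta exprDn_pchar // pnatX (pnatE _ hp) pchar //.
have th0 : th 0 = 0 by apply: ruE; rewrite /th /theta /ru_lift /= -/Th Th0.
set S := twshift th (n := beta).
have M0 : M 0 by exists 0.
have MD : forall a b, M a -> M b -> M (a + b).
  by move=> a b [m1 h1] [m2 h2]; exists (m1 + m2); exact: (CD _ _ h1 h2).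
have MZ : forall s a, M a -> M (s *: a).
  move=> s a [m0 h]; exists (map_mx (fun z : F => ra s * z) m0).
  suff -> : s *: a = map_mx (fun z => s * z) a by exact: (CZ s _ h).
  by apply/matrixP => u v; rewrite !mxE.
have MS : forall a, M a -> M (S a).
  by move=> a [m0 h]; exists (twshift Th m0); exact: (CS _ h).
have MSi : forall j a, M a -> M (iter j S a).
  by move=> j a hMa; elim: j => //= j; apply: MS.
have Mact : forall r t, M t -> M (skact th r t).
  move=> r t Mt; rewrite (skact_sum hb th0 t (leqnn _)).
  apply: (big_ind M) => // j _; apply: MZ; exact: MSi.
split; first by split.
have mapD : forall (f : Ru F -> F), (forall x y, f (x + y) = f x + f y) ->
    forall a b : 'rV[Ru F]_beta, map_mx f (a + b) = map_mx f a + map_mx f b.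
  by move=> f fD a b; apply/matrixP => u v; rewrite !mxE fD.
have raS : forall a, map_mx (@ra F) (S a) = twshift Th (map_mx (@ra F) a).
  by move=> a; apply/matrixP => u v; rewrite !mxE.
have phS : forall a, map_mx (@phi2 F) (S a) = twshift Th (map_mx (@phi2 F) a).
  by move=> a; apply/matrixP => u v; rewrite !mxE /phi2 /= ThD.
have raSi : forall j a, map_mx (@ra F) (iter j S a) = iter j (twshift Th) (map_mx (@ra F) a).
  by move=> j a; elim: j => //= j IH; rewrite raS IH.
have phSi : forall j a, map_mx (@phi2 F) (iter j S a) = iter j (twshift Th) (map_mx (@phi2 F) a).
  by move=> j a; elim: j => //= j IH; rewrite phS IH.
pose V1 v := exists t, M t /\ v = map_mx (@ra F) t.
pose V2 v := exists t, M t /\ v = map_mx (@phi2 F) t.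
have [g1 [[t1 [Mt1 ->]] G1]] : exists g, V1 g /\ forall w, V1 w ->
    exists c : nat -> F, w = \sum_(i < beta) c i *: iter i (twshift Th) g.
  apply: cyclic_gen => //.
  - by exists 0; split => //; apply/matrixP => u v; rewrite !mxE.
  - move=> a b [ta [Ma ->]] [tb [Mb ->]]; exists (ta + tb); split; first exact: MD.
    by rewrite mapD.
  - move=> c a [ta [Ma ->]]; exists (mkRu c 0 *: ta); split; first exact: MZ.
    by apply/matrixP => u v; rewrite !mxE raM.
  - move=> a [ta [Ma ->]]; exists (S ta); split; first exact: MS.
    by rewrite raS.
have [g2 [[t2 [Mt2 ->]] G2]] : exists g, V2 g /\ forall w, V2 w ->
    exists c : nat -> F, w = \sum_(i < beta) c i *: iter i (twshift Th) g.
  apply: cyclic_gen => //.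
  - by exists 0; split => //; apply/matrixP => u v; rewrite !mxE phi20.
  - move=> a b [ta [Ma ->]] [tb [Mb ->]]; exists (ta + tb); split; first exact: MD.
    by rewrite mapD //; apply: phi2D.
  - move=> c a [ta [Ma ->]]; exists (mkRu c 0 *: ta); split; first exact: MZ.
    apply/matrixP => u v; rewrite !mxE phi2M; congr (_ * _).
    by rewrite /phi2 /= addr0.
  - move=> a [ta [Ma ->]]; exists (S ta); split; first exact: MS.
    by rewrite phS.
set g := mkRu 1 (-1) *: t1 + mkRu 0 1 *: t2.
have Mg : M g by apply: MD; apply: MZ.
have rag : map_mx (@ra F) g = map_mx (@ra F) t1.
  apply/matrixP => u v; rewrite !mxE raD !raM /=; ring.
have phg : map_mx (@phi2 F) g = map_mx (@phi2 F) t2.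
  apply/matrixP => u v; rewrite !mxE phi2D !phi2M /phi2 /=; ring.
exists g => t; split; last by move=> [r ->]; apply: Mact.
move=> Mt.
have [c1 h1] := G1 _ (ex_intro _ t (conj Mt erefl)).
have [c2 h2] := G2 _ (ex_intro _ t (conj Mt erefl)).
pose s j := mkRu (c1 j) (c2 j - c1 j).
exists (\poly_(j < beta) s j).
rewrite (@skact_sum _ _ _ hb th0 _ g beta) ?size_poly //.
apply/matrixP => z k; rewrite ord1 summxE.
under eq_bigr => j _ do rewrite mxE coef_poly ltn_ord.
apply: ruE.
  transitivity ((map_mx (@ra F) t) ord0 k); first by rewrite mxE.
  rewrite h1 summxE (big_morph (@ra F) (@raD F) (@ra0 F)).
  apply: eq_bigr => j _; rewrite !mxE raM -rag -raSi mxE.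
  by [].
transitivity ((map_mx (@phi2 F) t) ord0 k); first by rewrite mxE.
rewrite h2 summxE -/(phi2 _) (big_morph (@phi2 F) (@phi2D F) (@phi20 F)).
apply: eq_bigr => j _; rewrite !mxE phi2M -phg -phSi mxE.
by congr (_ * _); rewrite /phi2 /s /= addrC subrK.
Qed.
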